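(* Let $D=(E,\mathcal{F})$ be a delta-matroid. Then ${}^{\partial}w_{D}(z)$ is a constant (i.e. equals some integer $k$) if and only if $|\mathcal{F}|=1$.
   Context: A delta-matroid is a set system $(E,\mathcal{F})$, $\mathcal{F}\ne\emptyset$ a family of subsets of finite $E$, satisfying: for all $X,Y\in\mathcal{F}$ and $u\in X\Delta Y$ there is $v\in X\Delta Y$ (possibly $v=u$) with $X\Delta\{u,v\}\in\mathcal{F}$. Twist: $D*A=(E,\{A\Delta X:X\in\mathcal{F}\})$. Width $w(D)$ = maximum minus minimum cardinality of feasible sets; twist polynomial ${}^{\partial}w_{D}(z)=\sum_{A\subseteq E}z^{w(D*A)}$. *)

(* Defs.v *)
From mathcomp Require Import all_boot all_order all_algebra.
Set Implicit Arguments. Unset Strict Implicit. Unset Printing Implicit Defensive.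
Import GRing.Theory.
Local Open Scope ring_scope.

Definition symdiff (E : finType) (X Y : {set E}) : {set E} := (X :\: Y) :|: (Y :\: X).

Definition is_delta_matroid (E : finType) (F : {set {set E}}) : Prop :=
  F != set0 /\
  forall X Y, X \in F -> Y \in F -> forall u, u \in symdiff X Y ->
    exists2 v, v \in symdiff X Y & symdiff X [set u; v] \in F.

Definition twist (E : finType) (F : {set {set E}}) (A : {set E}) : {set {set E}} :=
  [set symdiff A X | X in F].

(* Maximum and minimum cardinalities of feasible sets (for nonempty F).
   The minimum is taken with neutral #|E|, an upper bound of all #|X|. *)
Definition maxcard (E : finType) (F : {set {set E}}) : nat := (\max_(X in F) #|X|)%N.
Definition mincard (E : finType) (F : {set {set E}}) : nat :=
  (\big[minn/#|E|]_(X in F) #|X|)%N.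

Definition width (E : finType) (F : {set {set E}}) : nat := (maxcard F - mincard F)%N.

Definition twist_poly (E : finType) (F : {set {set E}}) : {poly int} :=
  \sum_(A : {set E}) 'X^(width (twist F A)).

(* Main.v *)
Require Import Defs.
From mathcomp Require Import all_boot all_order all_algebra.
Import GRing.Theory Num.Theory.
Local Open Scope ring_scope.

Lemma bigmin_le (T : eqType) (r : seq T) (P : pred T) (f : T -> nat) m a :
  a \in r -> P a -> (\big[minn/m]_(i <- r | P i) f i <= f a)%N.
Proof.
elim: r => // i r IH; rewrite inE big_cons => /orP [/eqP <- ->|ar Pa].
  by rewrite geq_minl.
case: (P i); last exact: IH.
by rewrite geq_min IH ?orbT.
Qed.

Lemma width1 (E : finType) (S : {set E}) : width [set S] = 0%N.
Proof.
rewrite /width /maxcard /mincard big_set1.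
have -> : (\big[minn/#|E|]_(X in [set S]) #|X| = #|S|)%N.
  apply/eqP; rewrite eqn_leq; apply/andP; split.
    by apply: bigmin_le; rewrite ?mem_index_enum ?inE.
  apply: (big_ind (fun x => #|S| <= x)%N).
  - exact: max_card.
  - by move=> x y hx hy; rewrite leq_min hx hy.
  - by move=> X; rewrite inE => /eqP ->.
by rewrite subnn.
Qed.

Theorem mainTheorem6 (E : finType) (F : {set {set E}}) :
  is_delta_matroid F ->
  ((exists k : int, twist_poly F = k%:P) <-> #|F| = 1%N).
Proof.
move=> [F0 _]; split.
- move=> [k Hk].
  have Fpos : (0 < #|F|)%N by rewrite card_gt0.
  apply/eqP; rewrite eqn_leq Fpos andbT leqNgt; apply/negP => /card_gt1P.
  move=> [X [Y [XF YF XY]]].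
  set d := width (twist F X).
  have dpos : (0 < d)%N.
    have m0 : mincard (twist F X) = 0%N.
      apply/eqP; rewrite -leqn0.
      apply: (leq_trans (@bigmin_le _ (index_enum {set E}) (fun Z => Z \in twist F X) (fun Z => #|Z|) #|E| (symdiff X X) _ _)).
      - by rewrite mem_index_enum.
      - by apply: imset_f.
      - by rewrite /symdiff setDv setU0 cards0.
    rewrite /d /width m0 subn0.
    apply: (@leq_trans #|symdiff X Y|); last first.
      rewrite /maxcard; apply: (@leq_bigmax_cond _ (fun Z => Z \in twist F X) (fun Z => #|Z|)); exact: imset_f.
    rewrite lt0n cards_eq0; apply/negP.
    rewrite /symdiff setU_eq0 !setD_eq0 => /andP [h1 h2].
    by move: XY; rewrite eqEsubset h1 h2.
  have := congr1 (fun p : {poly int} => p`_d) Hk.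
  rewrite /= coefC gtn_eqF // /twist_poly coef_sum.
  under eq_bigr do rewrite coefXn.
  rewrite -natr_sum => /eqP; rewrite pnatr_eq0 sum_nat_eq0 => /forallP/(_ X).
  by rewrite eqxx.
- move=> /eqP/cards1P [S ->].
  exists (#|{: {set E}}|%:Z).
  rewrite /twist_poly.
  under eq_bigr do rewrite /twist imset_set1 width1 expr0.
  by rewrite sumr_const -polyC_natr natz.
Qed.
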